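(* Let $\gamma_1,\dots,\gamma_r>0$, and let $\mu:[0,\infty)\to\mathbb{R}$ be Lipschitz continuous with $\mu(t)\ge0$ for all $t\ge0$. Let $\varphi(t)$ solve $\dot\varphi=A_\gamma\varphi+B\mu(t)$ and set $\Delta\varphi(t)=\varphi(t)-\Gamma\mu(t)$. Then $\Delta\varphi(\cdot)$ stays bounded on $[0,\infty)$.
   Context: $A_\gamma$ is the $r\times r$ matrix with diagonal entries $-\gamma_1,\dots,-\gamma_r$, entries $1$ on the superdiagonal, and zeros elsewhere; $B=[0,\dots,0,1]^\top\in\mathbb{R}^r$; $\Gamma=-A_\gamma^{-1}B=[(\gamma_1\cdots\gamma_r)^{-1},(\gamma_2\cdots\gamma_r)^{-1},\dots,\gamma_r^{-1}]^\top$. *)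

(* Defs.v *)
From HB Require Import structures.
From mathcomp Require Import all_boot all_order all_algebra.
From mathcomp Require Import all_classical all_reals all_analysis.
Set Implicit Arguments. Unset Strict Implicit. Unset Printing Implicit Defensive.
Import Order.TTheory GRing.Theory Num.Theory.
Import numFieldNormedType.Exports.
Local Open Scope ring_scope.

Definition Agamma (R : pzRingType) (r : nat) (g : 'I_r -> R) : 'M[R]_r :=
  \matrix_(i < r, j < r)
    (if i == j then - g i else if (j : nat) == i.+1 then 1 else 0).

Definition Bvec (R : pzRingType) (r : nat) : 'cV[R]_r :=
  \col_(i < r) (if i.+1 == r then 1 else 0).

Definition Gammavec (R : fieldType) (r : nat) (g : 'I_r -> R) : 'cV[R]_r :=
  - (invmx (Agamma g) *m Bvec R r).

(* Main.v *)
Require Import Defs.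
From HB Require Import structures.
From mathcomp Require Import all_boot all_order all_algebra.
From mathcomp Require Import all_classical all_reals all_analysis.
Import Order.TTheory GRing.Theory Num.Theory.
Import numFieldNormedType.Exports.
From mathcomp Require Import ring lra.
Local Open Scope ring_scope.
Local Open Scope classical_set_scope.

Section S.
Variable R : realType.

Lemma deriv_left_lt (y : R -> R) (c d b : R) : is_derive c 1 y d -> d < b ->
  exists2 e : R, 0 < e & forall h, 0 < h < e -> y c - y (c - h) < b * h.
Proof.
move=> yd db.
have H : (fun h : R => h^-1 *: ((y \o shift c) (h *: 1) - y c)) @ 0^' --> d.
  rewrite -(@derive_val _ _ _ _ _ _ _ yd); exact: (@ex_derive _ _ _ _ _ _ _ yd).
have := @cvgr_lt R _ _ _ _ _ H b db.
move=> /(_ (dnbhs_filter _)).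

rewrite near_withinE => /nbhs_ballP[e e0 He].
exists e => // h /andP[h0 he].
have := He (- h).
rewrite /ball /= sub0r opprK gtr0_norm // => /(_ he).
rewrite oppr_eq0 gt_eqF // => /(_ isT).
rewrite /GRing.scale /= mulr1 invrN mulNr -mulrN opprB addrC -(@ltr_pM2l _ h) // mulrA mulfV ?gt_eqF // mul1r [b * h]mulrC.
by rewrite addrC (addrC (- h)).
Qed.


Arguments deriv_left_lt {y c d b}.

Lemma upper_scalar (gam L : R) (y f : R -> R) :
  0 < gam -> 0 <= L ->
  (forall T : R, 0 < T -> {within `[0, T], continuous (fun t => gam * y t - f t)}) ->
  (forall t : R, 0 < t -> is_derive t 1 y (f t - gam * y t)) ->
  (forall t : R, 0 < t -> exists2 e : R, 0 < e & forall h : R, 0 < h < e -> `|f (t - h) - f t| <= L * h) ->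
  forall t : R, 0 <= t -> gam * y t - f t <= `|gam * y 0 - f 0| + L / gam.
Proof.
move=> g0 L0 zc yd fl t t0.
case: (eqVneq t 0) => [->|tn0].
  by rewrite -[X in X <= _]addr0 lerD ?real_ler_norm ?num_real // divr_ge0 // ltW.
have tp : 0 < t by rewrite lt_def tn0 t0.
have [c ct cmax] := EVT_max t0 (zc t tp).
apply: (le_trans (cmax t _)); first by rewrite in_itv /= t0 lexx.
move: ct; rewrite in_itv /= => /andP[c0 ct].
have K0 : 0 <= L / gam by rewrite divr_ge0 // ltW.
case: (eqVneq c 0) => [->|cn0].
  by rewrite -[X in X <= _]addr0 lerD // real_ler_norm // num_real.
have cp : 0 < c by rewrite lt_def cn0 c0.
rewrite leNgt; apply/negP => Hc.
have Hz : L / gam < gam * y c - f c.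
  by apply: le_lt_trans Hc; rewrite lerDr.
have dlt : f c - gam * y c < - (L / gam) by rewrite -opprB ltrN2.
have [e1 e10 He1] := deriv_left_lt (yd c cp) dlt.
have [e2 e20 He2] := fl c cp.
pose h := Num.min (Num.min e1 e2) c / 2.
have hp : 0 < h by rewrite divr_gt0 // !lt_min e10 e20 cp.
have hm : h < Num.min (Num.min e1 e2) c.
  by rewrite /h ltr_pdivrMr // ltr_pMr ?ltr1n // !lt_min e10 e20 cp.
move: hm; rewrite !lt_min => /andP[/andP[h1 h2] hc].
have := cmax (c - h); rewrite in_itv /= subr_ge0 (ltW hc) /=.
have -> : c - h <= t by rewrite (le_trans _ ct) // gerBl ltW.
move=> /(_ isT); apply/negP; rewrite -ltNge.
have A := He1 h (introT andP (conj hp h1)).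
have B := He2 h (introT andP (conj hp h2)).
rewrite mulNr -ltrN2 opprK opprB in A.
have A' : L * h < gam * (y (c - h) - y c).
  have -> : L * h = gam * (L / gam * h) by field; rewrite gt_eqF.
  by rewrite ltr_pM2l.
have B' : f (c - h) - f c <= L * h := le_trans (ler_norm _) B.
rewrite -subr_gt0; apply: (lt_le_trans (_ : 0 < gam * (y (c - h) - y c) - (f (c - h) - f c))).
  by rewrite subr_gt0 (le_lt_trans B').
by rewrite le_eqVlt; apply/orP; left; apply/eqP; ring.
Qed.

Arguments upper_scalar {gam L y f}.

Lemma abs_scalar (gam L : R) (y f : R -> R) :
  0 < gam -> 0 <= L ->
  (forall T : R, 0 < T -> {within `[0, T], continuous (fun t => gam * y t - f t)}) ->
  (forall t : R, 0 < t -> is_derive t 1 y (f t - gam * y t)) ->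
  (forall t : R, 0 < t -> exists2 e : R, 0 < e & forall h : R, 0 < h < e -> `|f (t - h) - f t| <= L * h) ->
  forall t : R, 0 <= t -> `|gam * y t - f t| <= `|gam * y 0 - f 0| + L / gam.
Proof.
move=> g0 L0 zc yd fl t t0.
rewrite ler_norml (upper_scalar g0 L0 zc yd fl t t0) andbT.
have A : forall T : R, 0 < T -> {within `[0, T], continuous (fun t => gam * - y t - - f t)}.
  move=> T T0; have := zc T T0.
  have -> : (fun t => gam * - y t - - f t) = (fun t => - (gam * y t - f t)).
    by apply/funext => x; rewrite opprB mulrN opprK addrC.
  move=> H x; exact: cvgN (H x).
have B : forall t : R, 0 < t -> is_derive t 1 (fun t => - y t) (- f t - gam * - y t).
  move=> x x0; apply: is_derive_eq; first exact: is_deriveN (yd x x0).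
  by rewrite /= mulrN opprB opprK addrC.
have C : forall t : R, 0 < t -> exists2 e : R, 0 < e & forall h : R, 0 < h < e -> `|- f (t - h) - - f t| <= L * h.
  move=> x x0; have [e e0 He] := fl x x0; exists e => // h hh.
  by rewrite -opprD normrN; apply: He.
have H := @upper_scalar gam L (fun t => - y t) (fun t => - f t) g0 L0 A B C t t0.
have E : forall u v : R, gam * - u - - v = - (gam * u - v) by move=> u v; ring.
by rewrite !E normrN lerNl in H.
Qed.

Definition cont0 (f : R -> R) := f @ 0^'+ --> f 0 /\ forall t : R, 0 < t -> {for t, continuous f}.

Lemma cont0_lin (a : R) (y f : R -> R) : cont0 y -> cont0 f -> cont0 (fun t => a * y t - f t).
Proof.
move=> [y0 yc] [f0 fc]; split.
  by apply: cvgB => //; apply: cvgMl_tmp.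
by move=> t t0; apply: cvgB; [apply: cvgMl_tmp; apply: yc|apply: fc].
Qed.

Lemma cont0_within (f : R -> R) (T : R) : cont0 f -> 0 < T -> {within `[0, T], continuous f}.
Proof.
move=> [f0 fc] T0; apply/continuous_within_itvP => //; split => //.
  by move=> x; rewrite in_itv /= => /andP[x0 _]; exact: fc.
exact: cvg_within_filter (fc T T0).
Qed.

Lemma derive_cont (y : R -> R) (t d : R) : is_derive t 1 y d -> {for t, continuous y}.
Proof.
move=> yd; apply: differentiable_continuous; apply/derivable1_diffP.
exact: (@ex_derive _ _ _ _ _ _ _ yd).
Qed.

Lemma deriv_local_lip (y : R -> R) (t d M : R) : is_derive t 1 y d -> `|d| <= M ->
  exists2 e : R, 0 < e & forall h : R, 0 < h < e -> `|y (t - h) - y t| <= (M + 1) * h.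
Proof.
move=> yd dM.
have d1 : d < M + 1 by apply: le_lt_trans (ler_norm d) _; rewrite (le_lt_trans dM) // ltrDl.
have d2 : - d < M + 1 by apply: le_lt_trans (ler_norm (- d)) _; rewrite normrN (le_lt_trans dM) // ltrDl.
have [e1 e10 H1] := deriv_left_lt yd d1.
have [e2 e20 H2] := deriv_left_lt (is_deriveN yd) d2.
exists (Num.min e1 e2); first by rewrite lt_min e10 e20.
move=> h /andP[h0]; rewrite lt_min => /andP[he1 he2].
have A := H1 h (introT andP (conj h0 he1)).
have B := H2 h (introT andP (conj h0 he2)).
rewrite ler_norml; apply/andP; split.
  by rewrite lerNl opprB ltW.
by rewrite /= opprK addrC in B; rewrite ltW.
Qed.

Section Lip.
Variables (mu : R -> R) (k : R).
Hypothesis Hk : forall s t : R, 0 <= s -> 0 <= t -> `|mu s - mu t| <= k * `|s - t|.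

Lemma lip_eps (t eps : R) : 0 <= t -> 0 < eps -> exists2 e : R, 0 < e &
  forall x : R, 0 <= x -> `|t - x| < e -> `|mu t - mu x| < eps.
Proof.
move=> t0 e0; exists (eps / (`|k| + 1)).
  by rewrite divr_gt0 // ltr_pwDr.
move=> x x0 tx; apply: (le_lt_trans (Hk _ _ t0 x0)).
apply: (le_lt_trans (ler_norm _)); rewrite normrM.
apply: (le_lt_trans (_ : _ <= `|k| * (eps / (`|k| + 1)))).
  by apply: ler_wpM2l => //; rewrite normr_id ltW.
by rewrite mulrA ltr_pdivrMr ?ltr_pwDr // mulrDr mulr1 mulrC ltrDl.
Qed.

Lemma lip_cont0 : cont0 mu.
Proof.
split.
  apply/cvgrPdist_lt => eps e0; have [e ep He] := @lip_eps 0 eps (lexx 0) e0.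
  rewrite near_withinE; apply/nbhs_ballP; exists e => // x.
  rewrite /ball /= => Hx x0; apply: He => //; exact: ltW.
move=> t t0; apply/cvgrPdist_lt => eps e0.
have [e ep He] := @lip_eps t eps (ltW t0) e0.
apply/nbhs_ballP; exists (Num.min e t); first by rewrite /= lt_min ep t0.
move=> x; rewrite /ball /= lt_min => /andP[xe xt]; apply: He => //.
have : t - x < t := le_lt_trans (ler_norm _) xt.
by rewrite ltrBlDr ltrDl => /ltW.
Qed.

Lemma lip_local (t : R) : 0 < t -> exists2 e : R, 0 < e &
  forall h : R, 0 < h < e -> `|mu (t - h) - mu t| <= `|k| * h.
Proof.
move=> t0; exists t => // h /andP[h0 ht].
have th : 0 <= t - h by rewrite subr_ge0 ltW.
apply: (le_trans (Hk (t - h) t th (ltW t0))).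
rewrite addrAC subrr add0r normrN gtr0_norm //.
by apply: ler_wpM2r; [exact: ltW|exact: ler_norm].
Qed.
End Lip.

Lemma scalar_main (gam L : R) (y f : R -> R) :
  0 < gam -> 0 <= L -> cont0 y -> cont0 f ->
  (forall t : R, 0 < t -> is_derive t 1 y (f t - gam * y t)) ->
  (forall t : R, 0 < t -> exists2 e : R, 0 < e & forall h : R, 0 < h < e -> `|f (t - h) - f t| <= L * h) ->
  forall t : R, 0 <= t -> `|gam * y t - f t| <= `|gam * y 0 - f 0| + L / gam.
Proof.
move=> g0 L0 cy cf; apply: abs_scalar => // T T0.
have := @cont0_lin gam y f cy cf; move=> /cont0_within; apply; exact: T0.
Qed.
End S.

Section M.
Variable R : realType.

Lemma Agamma_mul r (g : 'I_r -> R) (v : 'cV[R]_r) (i : 'I_r) :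
  (Agamma g *m v) i ord0 = - g i * v i ord0 +
    (if (i.+1 < r)%N then v (insubd i i.+1) ord0 else 0).
Proof.
rewrite mxE (bigD1 i) //= mxE eqxx; congr (_ + _).
case: ifP => ir.
  have vE : val (insubd i i.+1) = i.+1 by rewrite val_insubd ir.
  rewrite (bigD1 (insubd i i.+1)) /=; last first.
    by rewrite -(inj_eq val_inj) vE gtn_eqF.
  rewrite mxE ifN; last by rewrite -(inj_eq val_inj) vE eq_sym gtn_eqF.
  rewrite vE eqxx mul1r.
  rewrite big1 ?addr0 // => j /andP[ji jn]; rewrite mxE eq_sym (negbTE ji) ifN ?mul0r //.
  by apply: contra jn => /eqP jE; apply/eqP/val_inj; rewrite vE.
rewrite big1 // => j ji; rewrite mxE eq_sym (negbTE ji) ifN ?mul0r //.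
apply/eqP => jE; move: (ltn_ord j); rewrite jE ir //.
Qed.

Lemma Bvec_E r (i : 'I_r) : Bvec R r i ord0 = if i.+1 == r then 1 else 0.
Proof. by rewrite mxE. Qed.

Lemma Agamma_unit r (g : 'I_r -> R) : (forall i, 0 < g i) -> Agamma g \in unitmx.
Proof.
move=> gp; rewrite unitmxE -det_tr det_trig.
  rewrite unitfE prodf_seq_neq0; apply/allP => i _ /=.
  by rewrite !mxE eqxx oppr_eq0 gt_eqF.
apply/is_trig_mxP => i j ij; rewrite !mxE ifN; last by rewrite neq_ltn ij orbT.
rewrite ifN //; apply/negP => /eqP jE; move: ij; rewrite jE ltnNge leqnSn.
by [].
Qed.

Lemma Gamma_eq r (g : 'I_r -> R) : (forall i, 0 < g i) ->
  Agamma g *m Gammavec g = - Bvec R r.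
Proof.
move=> gp; rewrite /Gammavec mulmxN mulmxA mulmxV ?mul1mx //.
exact: Agamma_unit.
Qed.

Lemma comp_derive r (phi : R -> 'cV[R]_r) (t : R) (D : 'cV[R]_r) (i : 'I_r) :
  is_derive t 1 phi D -> is_derive t 1 (fun s => phi s i ord0) (D i ord0).
Proof.
move=> pd.
have H : (fun h : R => h^-1 *: ((phi \o shift t) (h *: 1) - phi t)) @ 0^' --> D.
  rewrite -(@derive_val _ _ _ _ _ _ _ pd); exact: (@ex_derive _ _ _ _ _ _ _ pd).
have H2 : (fun h : R => h^-1 *: (((fun s => phi s i ord0) \o shift t) (h *: 1) - phi t i ord0)) @ 0^' --> D i ord0.
  have -> : (fun h : R => h^-1 *: (((fun s => phi s i ord0) \o shift t) (h *: 1) - phi t i ord0)) = (fun M : 'cV[R]_r => M i ord0) \o (fun h : R => h^-1 *: ((phi \o shift t) (h *: 1) - phi t)).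
    by apply/funext => h /=; rewrite !mxE.
  exact: cvg_comp H (@coord_continuous R r 1 i ord0 D).
apply: DeriveDef; first by apply/cvg_ex; exists (D i ord0).
exact: cvg_lim H2.
Qed.

Lemma comp_right r (phi : R -> 'cV[R]_r) (i : 'I_r) :
  phi x @[x --> 0^'+] --> phi 0 -> (fun s => phi s i ord0) x @[x --> 0^'+] --> phi 0 i ord0.
Proof.
move=> H; exact: cvg_comp H (@coord_continuous R r 1 i ord0 (phi 0)).
Qed.
End M.
Arguments Gamma_eq {R r g}.
Arguments cont0 {R}.
Arguments comp_derive {R r phi t D i}.
Arguments comp_right {R r phi i}.
Arguments derive_cont {R y t d}.
Arguments lip_cont0 {R mu k}.
Arguments lip_local {R mu k}.
Arguments scalar_main {R gam L y f}.
Arguments deriv_local_lip {R y t d M}.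

Theorem lemma1 (R : realType) (r : nat) (g : 'I_r -> R) (mu : R -> R)
    (phi : R -> 'cV[R]_r) :
  (0 < r)%N ->
  (forall i, 0 < g i) ->
  (exists k : R, forall s t : R, 0 <= s -> 0 <= t -> `|mu s - mu t| <= k * `|s - t|) ->
  (forall t : R, 0 <= t -> 0 <= mu t) ->
  (phi x @[x --> 0^'+] --> phi 0) ->
  (forall t : R, 0 < t -> is_derive t 1 phi (Agamma g *m phi t + mu t *: Bvec R r)) ->
  exists M : R, forall t : R, 0 <= t -> `|phi t - mu t *: Gammavec g| <= M.
Proof.
move=> r0 gp [k Hk] mu0 phi0 phid.
pose y (i : 'I_r) := fun s => phi s i ord0.
pose G (i : 'I_r) := Gammavec g i ord0.
have GE : forall i : 'I_r, - g i * G i + (if (i.+1 < r)%N then G (insubd i i.+1) else 0) = - (if i.+1 == r then 1 else 0).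
  move=> i; have H := congr1 (fun M : 'cV[R]_r => M i ord0) (Gamma_eq gp); simpl in H.
  by rewrite Agamma_mul [in RHS]mxE Bvec_E in H.
have yd : forall (i : 'I_r) (t : R), 0 < t -> is_derive t 1 (y i)
    (- g i * y i t + (if (i.+1 < r)%N then y (insubd i i.+1) t else 0) + mu t * (if i.+1 == r then 1 else 0)).
  move=> i t t0; apply: is_derive_eq; first exact: comp_derive (phid t t0).
  by rewrite mxE [in X in _ + X]mxE Bvec_E Agamma_mul.
have cy : forall i : 'I_r, cont0 (y i).
  move=> i; split; first exact: comp_right phi0.
  by move=> t t0; exact: derive_cont (yd i t t0).
have cmu : cont0 mu := lip_cont0 Hk.
pose P (i : 'I_r) := (exists C : R, forall t : R, 0 <= t -> `|y i t - G i * mu t| <= C) /\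
  (exists L : R, 0 <= L /\ forall t : R, 0 < t -> exists2 e : R, 0 < e &
     forall h : R, 0 < h < e -> `|y i (t - h) - y i t| <= L * h).
have step : forall i : 'I_r, ((i.+1 < r)%N -> P (insubd i i.+1)) -> P i.
  move=> i Hnext; have g0 := gp i; have gn0 : g i != 0 by rewrite gt_eqF.
  case: (ltnP i.+1 r) => ir.
    set j := insubd i i.+1.
    have [[C1 HC1] [L1 [L10 HL1]]] := Hnext ir.
    have GEi : G j = g i * G i.
      have := GE i; rewrite ir (ltn_eqF ir) oppr0 => /eqP.
      by rewrite addrC addr_eq0 mulNr opprK => /eqP.
    have yd' : forall t : R, 0 < t -> is_derive t 1 (y i) (y j t - g i * y i t).
      move=> t t0; apply: is_derive_eq; first exact: (yd i t t0).
      by rewrite ir (ltn_eqF ir) mulr0 addr0 addrC mulNr.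
    have K := scalar_main g0 L10 (cy i) (cy j) yd' HL1.
    set K0 := `|g i * y i 0 - y j 0| + L1 / g i in K.
    have K00 : 0 <= K0 := le_trans (normr_ge0 _) (K 0 (lexx 0)).
    split.
      exists ((K0 + C1) / g i) => t t0.
      have -> : y i t - G i * mu t = ((g i * y i t - y j t) + (y j t - G j * mu t)) / g i.
        by rewrite GEi; field.
      rewrite normrM normfV (gtr0_norm g0) ler_pM2r ?invr_gt0 //.
      apply: le_trans (ler_normD _ _) _; apply: lerD; [exact: K|exact: HC1].
    exists (K0 + 1); split; first by rewrite addr_ge0.
    move=> t t0; apply: (deriv_local_lip (yd' t t0)).
    by rewrite distrC; apply: K; apply: ltW.
  have ie : i.+1 == r by rewrite eqn_leq ltn_ord ir.
  have ir' : (i.+1 < r)%N = false by rewrite ltnNge ir.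
  have GEi : G i = (g i)^-1.
    have := GE i; rewrite ir' ie addr0 mulNr => /eqP; rewrite eqr_opp => /eqP H.
    by apply: (mulfI gn0); rewrite H mulfV.
  have yd' : forall t : R, 0 < t -> is_derive t 1 (y i) (mu t - g i * y i t).
    move=> t t0; apply: is_derive_eq; first exact: (yd i t t0).
    by rewrite ir' ie mulr1 addr0 addrC mulNr.
  have K := scalar_main g0 (normr_ge0 k) (cy i) cmu yd' (lip_local Hk).
  set K0 := `|g i * y i 0 - mu 0| + `|k| / g i in K.
  have K00 : 0 <= K0 := le_trans (normr_ge0 _) (K 0 (lexx 0)).
  split.
    exists (K0 / g i) => t t0.
    have -> : y i t - G i * mu t = (g i * y i t - mu t) / g i.
      by rewrite GEi; field.
    rewrite normrM normfV (gtr0_norm g0) ler_pM2r ?invr_gt0 //; exact: K.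
  exists (K0 + 1); split; first by rewrite addr_ge0.
  move=> t t0; apply: (deriv_local_lip (yd' t t0)).
  by rewrite distrC; apply: K; apply: ltW.
have ind : forall (m : nat) (i : 'I_r), (r <= i + m.+1)%N -> P i.
  elim=> [|m IH] i ri; apply: step => ir.
    by move: ri; rewrite addn1 leqNgt ir.
  apply: IH; rewrite val_insubd ir addSn -addnS //.
have [Cf HCf] := choice (fun i : 'I_r => proj1 (ind r i (leq_trans (leqnSn r) (leq_addl i r.+1)))).
have Cf0 : forall i, 0 <= Cf i := fun i => le_trans (normr_ge0 _) (HCf i 0 (lexx 0)).
exists (\sum_i Cf i) => t t0.
rewrite -[X in X <= _]/(mx_norm _) mx_normrE; apply: bigmax_le => [|[i j] _]; first exact: sumr_ge0.
have E : forall M : 'cV[R]_r, (phi t - mu t *: M) i ord0 = phi t i ord0 - mu t * M i ord0 by move=> M; rewrite !mxE.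
rewrite /= (ord1 j) E mulrC; apply: le_trans (HCf i t t0) _.
by rewrite (bigD1 i) //= lerDl sumr_ge0.
Qed.
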